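(* Let $f(x)=\frac1n\sum_{i=1}^nf_i(x)$ on $\mathbb{R}^d$, where each $f_i$ is convex and $L_i$-smooth, and let $x^*$ be a minimizer of $f$. Consider SGD with the SPS$^\ell_{\max}$ stepsize (defined in the context), and let $\alpha:=\min\{\frac1{2cL_{\max}},\gamma_b\}$ with $L_{\max}=\max_iL_i$. (i) If $c=1$, then for every $K\ge1$, $\mathbb{E}[f(\bar x^K)-f(x^* )]\le\frac{\|x^0-x^*\|^2}{\alpha K}+\frac{2\gamma_b\hat\sigma_B^2}{\alpha}$, where $\bar x^K=\frac1K\sum_{k=0}^{K-1}x^k$. (ii) If in addition $f$ is $\mu$-strongly convex and $c\ge1/2$, then for every $k\ge0$, $\mathbb{E}\|x^k-x^*\|^2\le(1-\mu\alpha)^k\|x^0-x^*\|^2+\frac{2\gamma_b\hat\sigma_B^2}{\mu\alpha}$.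
   Context: Minibatches: fix a batch size $B$; at each iteration a subset $\mathcal S_k\subseteq[n]$, $|\mathcal S_k|=B$, is sampled uniformly at random, independently across iterations. For $\mathcal S\subseteq[n]$, $f_{\mathcal S}:=\frac1{|\mathcal S|}\sum_{i\in\mathcal S}f_i$, $f^*_{\mathcal S}:=\inf_xf_{\mathcal S}(x)$ (assumed finite), and $\ell^*_{\mathcal S}$ is a given real number with $\ell^*_{\mathcal S}\le f^*_{\mathcal S}$. SGD: $x^{k+1}=x^k-\gamma_k\nabla f_{\mathcal S_k}(x^k)$ from given $x^0$. SPS$^\ell_{\max}$ stepsize: $\gamma_k=\min\left\{\frac{f_{\mathcal S_k}(x^k)-\ell^*_{\mathcal S_k}}{c\|\nabla f_{\mathcal S_k}(x^k)\|^2},\ \gamma_b\right\}$ with constants $c,\gamma_b>0$; if $\nabla f_{\mathcal S_k}(x^k)=0$ the iterate is not updated. $\hat\sigma_B^2:=\mathbb{E}_{\mathcal S}[f_{\mathcal S}(x^* )-\ell^*_{\mathcal S}]=f(x^* )-\mathbb{E}_{\mathcal S}[\ell^*_{\mathcal S}]$ with $\mathcal S$ uniform over subsets of size $B$. *)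

(* Defs.v *)
From HB Require Import structures.
From mathcomp Require Import all_boot all_order all_algebra.
From mathcomp Require Import all_classical all_reals all_analysis.
Set Implicit Arguments. Unset Strict Implicit. Unset Printing Implicit Defensive.
Import Order.TTheory GRing.Theory Num.Theory.
Import numFieldNormedType.Exports.
Local Open Scope ring_scope.

Section SPS.
Variables (R : realType) (n d : nat).

(* Euclidean inner product and norm on R^d = 'rV[R]_d
   (the library's built-in norm on matrices is the max norm, so we
   define the Euclidean one explicitly). *)
Definition dotp (u v : 'rV[R]_d) : R := \sum_(j < d) u 0 j * v 0 j.
Definition sqnorm (u : 'rV[R]_d) : R := dotp u u.
Definition enorm (u : 'rV[R]_d) : R := Num.sqrt (sqnorm u).

Definition is_gradient (h : 'rV[R]_d -> R) (g : 'rV[R]_d -> 'rV[R]_d) : Prop :=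
  forall x, differentiable h x /\ forall v, ('d h x : 'rV[R]_d -> R) v = dotp (g x) v.

Definition convex_fun (h : 'rV[R]_d -> R) : Prop :=
  forall (x y : 'rV[R]_d) (t : R), 0 <= t <= 1 ->
    h (t *: x + (1 - t) *: y) <= t * h x + (1 - t) * h y.

Definition smooth_with (g : 'rV[R]_d -> 'rV[R]_d) (L : R) : Prop :=
  forall x y, enorm (g x - g y) <= L * enorm (x - y).

Definition strongly_convex_with (h : 'rV[R]_d -> R) (g : 'rV[R]_d -> 'rV[R]_d)
  (mu : R) : Prop :=
  forall x y, h y >= h x + dotp (g x) (y - x) + mu / 2 * sqnorm (y - x).

Variables (f : 'I_n -> 'rV[R]_d -> R) (g : 'I_n -> 'rV[R]_d -> 'rV[R]_d).

Definition favg (x : 'rV[R]_d) : R := (n%:R)^-1 * \sum_(i < n) f i x.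
Definition gavg (x : 'rV[R]_d) : 'rV[R]_d := (n%:R)^-1 *: \sum_(i < n) g i x.

Definition fS (S : {set 'I_n}) (x : 'rV[R]_d) : R :=
  (#|S|%:R)^-1 * \sum_(i in S) f i x.
Definition gS (S : {set 'I_n}) (x : 'rV[R]_d) : 'rV[R]_d :=
  (#|S|%:R)^-1 *: \sum_(i in S) g i x.

Definition batches (B : nat) : {set {set 'I_n}} := [set S : {set 'I_n} | #|S| == B].

Variables (ell : {set 'I_n} -> R) (c gamma_b : R).

Definition sps_step (S : {set 'I_n}) (x : 'rV[R]_d) : R :=
  Num.min ((fS S x - ell S) / (c * sqnorm (gS S x))) gamma_b.

Definition sgd_step (x : 'rV[R]_d) (S : {set 'I_n}) : 'rV[R]_d :=
  if gS S x == 0 then x else x - sps_step S x *: gS S x.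

(* x^k from x^0 and the sequence of sampled batches S_0, ..., S_{k-1} *)
Definition iterate (x0 : 'rV[R]_d) (s : seq {set 'I_n}) : 'rV[R]_d :=
  foldl sgd_step x0 s.

(* Expectation over K i.i.d. uniform batches of size B: the uniform
   average over all K-tuples of size-B subsets. *)
Definition batch_tuples (B K : nat) : {set (K.-tuple {set 'I_n})} :=
  [set t : K.-tuple {set 'I_n} | all (fun S => S \in batches B) t].

Definition expect (B K : nat) (Phi : K.-tuple {set 'I_n} -> R) : R :=
  (#|batch_tuples B K|%:R)^-1 * \sum_(t in batch_tuples B K) Phi t.

Definition sigma_hat2 (B : nat) (xstar : 'rV[R]_d) : R :=
  favg xstar - (#|batches B|%:R)^-1 * \sum_(S in batches B) ell S.

Definition avg_iterate (x0 : 'rV[R]_d) (K : nat) (t : K.-tuple {set 'I_n})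
  : 'rV[R]_d :=
  (K%:R)^-1 *: \sum_(k < K) iterate x0 (take k t).

End SPS.

(* Main.v *)
Require Import Defs.
From HB Require Import structures.
From mathcomp Require Import all_boot all_order all_algebra all_fingroup.
From mathcomp Require Import all_classical all_reals all_analysis.
From mathcomp Require Import ring lra.
Import Order.TTheory GRing.Theory Num.Theory.
Import numFieldNormedType.Exports.
Local Open Scope classical_set_scope.
Local Open Scope ring_scope.
Section A.
Variables (R : realType) (d : nat).
Implicit Types u v w x : 'rV[R]_d.
Lemma dotpC u v : dotp u v = dotp v u.
Proof. by apply: eq_bigr => j _; rewrite mulrC. Qed.
Lemma dotpDl u v w : dotp (u + v) w = dotp u w + dotp v w.
Proof. by rewrite /dotp -big_split; apply: eq_bigr => j _; rewrite mxE mulrDl. Qed.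
Lemma dotpZl (a : R) u w : dotp (a *: u) w = a * dotp u w.
Proof. by rewrite /dotp mulr_sumr; apply: eq_bigr => j _; rewrite mxE mulrA. Qed.
Lemma dotpNl u w : dotp (- u) w = - dotp u w.
Proof. by rewrite -scaleN1r dotpZl mulN1r. Qed.
Lemma dotpBl u v w : dotp (u - v) w = dotp u w - dotp v w.
Proof. by rewrite dotpDl dotpNl. Qed.
Lemma dotpDr u v w : dotp w (u + v) = dotp w u + dotp w v.
Proof. by rewrite dotpC dotpDl !(dotpC w). Qed.
Lemma dotpZr (a : R) u w : dotp w (a *: u) = a * dotp w u.
Proof. by rewrite dotpC dotpZl dotpC. Qed.
Lemma dotpNr u w : dotp w (- u) = - dotp w u.
Proof. by rewrite dotpC dotpNl dotpC. Qed.
Lemma dotpBr u v w : dotp w (u - v) = dotp w u - dotp w v.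
Proof. by rewrite dotpDr dotpNr. Qed.
Lemma dotp_suml (I : finType) (P : pred I) (F : I -> 'rV[R]_d) w :
  dotp (\sum_(i | P i) F i) w = \sum_(i | P i) dotp (F i) w.
Proof.
rewrite /dotp exchange_big /=; apply: eq_bigr => j _.
by rewrite summxE mulr_suml.
Qed.
Lemma dotp0l w : dotp 0 w = 0.
Proof. by rewrite /dotp big1 // => j _; rewrite mxE mul0r. Qed.
Lemma sqnorm_ge0 u : 0 <= sqnorm u.
Proof. by apply: sumr_ge0 => j _; rewrite -expr2 sqr_ge0. Qed.
Lemma sqnorm_eq0 u : sqnorm u = 0 -> u = 0.
Proof.
move=> /eqP; rewrite /sqnorm /dotp psumr_eq0; last by move=> j _; rewrite -expr2 sqr_ge0.
move=> /allP H; apply/rowP => j; rewrite mxE.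
by have /(_ (mem_index_enum j))/implyP/(_ isT) := H j; rewrite mulf_eq0 orbb => /eqP.
Qed.
Lemma sqnormB u v : sqnorm (u - v) = sqnorm u - 2 * dotp u v + sqnorm v.
Proof. rewrite /sqnorm dotpBl !dotpBr (dotpC v u); ring. Qed.
Lemma sqnormZ (a : R) u : sqnorm (a *: u) = a ^+ 2 * sqnorm u.
Proof. by rewrite /sqnorm dotpZl dotpZr mulrA expr2. Qed.
Lemma enorm_sq u : enorm u ^+ 2 = sqnorm u.
Proof. by rewrite /enorm sqr_sqrtr // sqnorm_ge0. Qed.
Lemma enorm_ge0 u : 0 <= enorm u.
Proof. exact: sqrtr_ge0. Qed.
Lemma amgm (s : R) w v : 0 < s -> 2 * s * dotp w v <= sqnorm w + s ^+ 2 * sqnorm v.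
Proof.
move=> s0; have := sqnorm_ge0 (w - s *: v).
rewrite sqnormB sqnormZ dotpZr => H; lra.
Qed.
Lemma line_der (h : 'rV[R]_d -> R) gr x v (t : R) : is_gradient h gr ->
  is_derive t (1 : R) (fun s : R => h (x + s *: v)) (dotp (gr (x + t *: v)) v).
Proof.
move=> Hg; have [dh dv] := Hg (x + t *: v).
have E : (fun s : R => s^-1 *: (((fun s0 : R => h (x + s0 *: v)) \o shift t) (s *: 1) - h (x + t *: v))) =
   (fun s : R => s^-1 *: ((h \o shift (x + t *: v)) (s *: v) - h (x + t *: v))).
  apply/funext => s /=; congr (_ *: (h _ - _)).
  have -> : s%:A = s :> R by rewrite /GRing.scale /= mulr1.
  by rewrite scalerDl addrCA addrA.
have dd : derivable h (x + t *: v) v by exact: diff_derivable.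
apply: DeriveDef.
  by rewrite /derivable E.
by rewrite /derive E -/(derive h _ v) deriveE // dv.
Qed.
Lemma smooth_dot gr (L : R) x v (t : R) : 0 < L -> 0 < t -> smooth_with gr L ->
  dotp (gr (x + t *: v) - gr x) v <= L * t * sqnorm v.
Proof.
move=> L0 t0 Hs; set w := gr (x + t *: v) - gr x.
have H1 : enorm w <= L * enorm (t *: v) by have := Hs (x + t *: v) x; rewrite addrAC subrr add0r.
have H2 : sqnorm w <= L ^+ 2 * (t ^+ 2 * sqnorm v).
  rewrite -enorm_sq -sqnormZ -enorm_sq -exprMn.
  by apply: ler_pM => //; exact: enorm_ge0.
have := amgm (L * t) w v (mulr_gt0 L0 t0).
have := sqnorm_ge0 v => hv.
move=> H3.
have H4 : 2 * (L * t) * dotp w v <= 2 * (L * t) * (L * t * sqnorm v).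
  apply: (le_trans H3). rewrite exprMn. nra.
rewrite ler_pM2l in H4 => //; nra.
Qed.

Lemma descent h gr (L : R) x y : is_gradient h gr -> 0 < L -> smooth_with gr L ->
  h y <= h x + dotp (gr x) (y - x) + L / 2 * sqnorm (y - x).
Proof.
move=> Hg L0 Hs; set v := y - x; set a := dotp (gr x) v; set b := L / 2 * sqnorm v.
pose psi := (fun s : R => h (x + s *: v)) - a \*: id - b \*: (@id R) ^+ 2.
have Dpsi t : is_derive t (1:R) psi (dotp (gr (x + t *: v)) v - a - L * sqnorm v * t).
  apply: is_derive_eq.
  rewrite /psi.
  apply: is_deriveB; first apply: is_deriveB; first exact: line_der.
  have E1 (r : R) : r%:A = r by rewrite /GRing.scale /= mulr1.
  have E2 (r s : R) : r *: s = r * s by [].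
  by rewrite !E1 /= expr1 /b E2; field.
have Hd t : derivable psi t 1 by have := Dpsi t; case.
have Hc : {within `[0, 1], continuous psi}.
  by apply: derivable_within_continuous => t _; exact: Hd.
have Hneg t : t \in `]0, 1[%R -> derive1 psi t <= 0.
  move=> ht; rewrite derive1E derive_val.
  have t0 : 0 < t by move: ht; rewrite in_itv /= => /andP[].
  have := @smooth_dot gr L x v t L0 t0 Hs; rewrite dotpBl /a; lra.
have H0 := @ler0_derive1_le_cc R psi 0 1 (fun t _ => Hd t) Hneg Hc 1 0.
rewrite !in_itv /= lexx ler01 /= in H0; have := H0 (lexx _) isT isT.
have Epsi s : psi s = h (x + s *: v) - a * s - b * s ^+ 2 by [].
rewrite !Epsi scale0r addr0 scale1r /v [x + _]addrC subrK expr1n expr0n /= !mulr0 !mulr1 => H.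
lra.
Qed.
Lemma dot_bound (L t : R) w v : 0 < L -> 0 < t ->
  sqnorm w <= L ^+ 2 * (t ^+ 2 * sqnorm v) -> dotp w v <= L * t * sqnorm v.
Proof.
move=> L0 t0 H2.
have := amgm (L * t) w v (mulr_gt0 L0 t0).
have := sqnorm_ge0 v => hv H3.
have H4 : 2 * (L * t) * dotp w v <= 2 * (L * t) * (L * t * sqnorm v).
  apply: (le_trans H3). rewrite exprMn. nra.
rewrite ler_pM2l in H4 => //; nra.
Qed.

Lemma limit_trick (p q C : R) : 0 <= C -> (forall t, 0 < t -> t <= 1 -> p <= q + C * t) -> p <= q.
Proof.
move=> C0 H; rewrite leNgt; apply/negP => qp.
set e := p - q.
have e0 : 0 < e by rewrite subr_gt0.
set t := e / (C + e).
have Ce : 0 < C + e by lra.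
have Ht : t * (C + e) = e by rewrite /t mulfVK // gt_eqF.
have t0 : 0 < t by rewrite divr_gt0.
have t1 : t <= 1 by rewrite ler_pdivrMr // mul1r; lra.
have := H t t0 t1 => H1.
have : e * (C + e) <= C * t * (C + e) by rewrite ler_pM2r //; rewrite /e; lra.
rewrite -mulrA Ht; nra.
Qed.

Lemma grad_ineq h gr (L : R) x y : is_gradient h gr -> 0 < L -> smooth_with gr L ->
  convex_fun h -> h x + dotp (gr x) (y - x) <= h y.
Proof.
move=> Hg L0 Hs Hc; set v := y - x; set a := dotp (gr x) v.
apply: (@limit_trick _ _ (3 / 2 * L * sqnorm v)).
  by apply: mulr_ge0; [lra| exact: sqnorm_ge0].
move=> t t0 t1; set z := x + t *: v.
have Hz : z = t *: y + (1 - t) *: x by apply/rowP => j; rewrite !mxE; ring.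
have H1 : h z <= t * h y + (1 - t) * h x by rewrite Hz; apply: Hc; rewrite ltW.
have H2 := @descent h gr L z x Hg L0 Hs.
have Hxz : x - z = (- t) *: v by apply/rowP => j; rewrite !mxE; ring.
have H3 : dotp (gr x - gr z) v <= L * t * sqnorm v.
  apply: dot_bound => //.
  have := Hs x z; rewrite Hxz => H.
  rewrite -sqnormZ -enorm_sq -[sqnorm (t *: v)]enorm_sq -exprMn.
  have H' : enorm (gr x - gr z) <= L * enorm (t *: v).
    by move: H; rewrite /enorm sqnormZ sqrrN -sqnormZ.
  by apply: ler_pM => //; exact: enorm_ge0.
rewrite Hxz dotpZr sqnormZ in H2; rewrite dotpBl in H3.
rewrite -/a in H3.
have hv := sqnorm_ge0 v.
have : t * (h x + a) <= t * (h y + 3 / 2 * L * sqnorm v * t) by nra.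
by rewrite ler_pM2l.
Qed.
End A.
Section C.
Variables (R : realType) (n : nat).

Lemma sum_tuple_cons (B k : nat) (F : seq {set 'I_n} -> R) :
  \sum_(t in batch_tuples n B k.+1) F t =
  \sum_(S in batches n B) \sum_(t in batch_tuples n B k) F (S :: t).
Proof.
rewrite pair_big_dep /=.
rewrite (reindex (fun t : k.+1.-tuple {set 'I_n} => (thead t, [tuple of behead t]))) /=.
  apply: eq_big => t.
    by rewrite !inE /= {1}(tuple_eta t) /= inE.
  by move=> _; rewrite {1}(tuple_eta t).
exists (fun p : {set 'I_n} * k.-tuple {set 'I_n} => cons_tuple p.1 p.2) => [t _|[S t] _].
  by apply: val_inj; rewrite /= {3}(tuple_eta t).
by rewrite theadE /=; congr pair; apply: val_inj.
Qed.

Lemma card_tuple_cons (B k : nat) :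
  (#|batch_tuples n B k.+1|%:R : R) = #|batches n B|%:R * #|batch_tuples n B k|%:R.
Proof.
have E (A : {set k.+1.-tuple {set 'I_n}}) : (#|A|%:R : R) = \sum_(t in A) 1.
  by rewrite sumr_const.
rewrite E (sum_tuple_cons B k (fun _ => 1)) mulrC mulr_natr -sumr_const.
by apply: eq_bigr => S _; rewrite sumr_const.
Qed.

Lemma expect_cons (B k : nat) (F : seq {set 'I_n} -> R) :
  expect B (fun t : k.+1.-tuple {set 'I_n} => F t) =
  (#|batches n B|%:R)^-1 * \sum_(S in batches n B)
      expect B (fun t : k.-tuple {set 'I_n} => F (S :: t)).
Proof.
rewrite /expect card_tuple_cons sum_tuple_cons invfM -mulrA; congr (_ * _).
by rewrite mulr_sumr.
Qed.

Lemma expect0 (B : nat) (F : seq {set 'I_n} -> R) :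
  expect B (fun t : 0.-tuple {set 'I_n} => F t) = F [::].
Proof.
rewrite /expect.
have -> : batch_tuples n B 0 = [set [tuple]]%SET.
  by apply/setP => t; rewrite !inE tuple0 eqxx.
by rewrite cards1 big_set1 invr1 mul1r.
Qed.

Lemma card_batches B : #|batches n B| = 'C(n, B).
Proof. by rewrite /batches card_draws card_ord. Qed.

Definition Mcount B (i : 'I_n) : R := \sum_(S in batches n B) (i \in S)%:R.

Lemma Mcount_sym B i j : Mcount B i = Mcount B j.
Proof.
pose h := fun S : {set 'I_n} => tperm i j @: S.
have hK : involutive h.
  move=> S; rewrite /h -imset_comp.
  by rewrite (eq_imset _ (tpermK i j)) imset_id.
rewrite /Mcount (reindex_inj (inv_inj hK)) /h.
apply: eq_big => S.
  by rewrite !inE card_imset //; exact: perm_inj.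
by move=> _; rewrite -{1}(tpermR i j) mem_imset //; exact: perm_inj.
Qed.

Lemma sum_batches_mcount B (a : 'I_n -> R) :
  \sum_(S in batches n B) \sum_(i in S) a i = \sum_i Mcount B i * a i.
Proof.
have E S : \sum_(i in S) a i = \sum_i (i \in S)%:R * a i.
  rewrite big_mkcond /=; apply: eq_bigr => i _.
  by case: (i \in S); rewrite ?mul1r ?mul0r.
under eq_bigr => S _ do rewrite E.
rewrite exchange_big /=; apply: eq_bigr => i _.
by rewrite /Mcount mulr_suml.
Qed.

Lemma batches_avg B (a : 'I_n -> R) : (0 < B)%N -> (B <= n)%N ->
  (#|batches n B|%:R)^-1 * \sum_(S in batches n B) ((#|S|%:R)^-1 * \sum_(i in S) a i)
  = (n%:R)^-1 * \sum_i a i.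
Proof.
move=> B0 Bn.
have n0 : (0 < n)%N by apply: leq_trans Bn.
pose i0 : 'I_n := Ordinal n0.
have MC a' : \sum_(S in batches n B) \sum_(i in S) a' i = Mcount B i0 * \sum_i a' i.
  rewrite sum_batches_mcount mulr_sumr; apply: eq_bigr => i _.
  by rewrite (Mcount_sym B i i0).
have N0 : (#|batches n B|%:R : R) != 0 by rewrite pnatr_eq0 -lt0n card_batches bin_gt0.
have B0' : (B%:R : R) != 0 by rewrite pnatr_eq0 -lt0n.
have n0' : (n%:R : R) != 0 by rewrite pnatr_eq0 -lt0n.
have H1 := MC (fun _ => 1).
have E1 : \sum_(S in batches n B) \sum_(i in S) (1 : R) = #|batches n B|%:R * B%:R.
  rewrite mulrC mulr_natr -sumr_const; apply: eq_bigr => S.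
  by rewrite inE sumr_const => /eqP ->.
rewrite E1 sumr_const card_ord in H1.
have E2 : \sum_(S in batches n B) ((#|S|%:R)^-1 * \sum_(i in S) a i)
    = (B%:R)^-1 * \sum_(S in batches n B) \sum_(i in S) a i.
  rewrite mulr_sumr; apply: eq_bigr => S; rewrite inE => /eqP ->; done.
rewrite E2 MC.
have HM : Mcount B i0 = #|batches n B|%:R * B%:R / n%:R.
  move: H1; rewrite -mulr_natr mul1r => ->; by rewrite mulfK.
rewrite HM; field.
by rewrite N0 B0' n0'.
Qed.
End C.
Section M.
Variables (R : realType) (n d B : nat)
  (f : 'I_n -> 'rV[R]_d -> R) (g : 'I_n -> 'rV[R]_d -> 'rV[R]_d)
  (L : 'I_n -> R) (ell : {set 'I_n} -> R) (c gamma_b : R) (xstar : 'rV[R]_d).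
Hypotheses (HB0 : (0 < B)%N) (HBn : (B <= n)%N)
  (Hgrad : forall i, is_gradient (f i) (g i))
  (Hconv : forall i, convex_fun (f i))
  (HL : forall i, 0 < L i)
  (Hsm : forall i, smooth_with (g i) (L i))
  (Hell : forall S, S \in batches n B -> forall x, ell S <= fS f S x)
  (Hc : 0 < c) (Hgb : 0 < gamma_b).

Definition Lmax := \big[Num.max/0]_(i < n) L i.
Definition alpha := Num.min (1 / (2 * c * Lmax)) gamma_b.
Definition sig := sigma_hat2 f ell B xstar.

Lemma n_gt0 : (0 < n)%N. Proof. exact: leq_trans HBn. Qed.
Definition i0 : 'I_n := Ordinal n_gt0.

Lemma L_le i : L i <= Lmax.
Proof. exact: le_bigmax. Qed.
Lemma Lmax_gt0 : 0 < Lmax.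
Proof. exact: lt_le_trans (HL i0) (L_le i0). Qed.
Lemma alpha_gt0 : 0 < alpha.
Proof.
rewrite /alpha lt_min Hgb andbT; have := Lmax_gt0 => H.
by rewrite divr_gt0 // !mulr_gt0.
Qed.
Lemma alpha_le_gb : alpha <= gamma_b.
Proof. by rewrite /alpha ge_min lexx orbT. Qed.

Lemma dotp_gS (S : {set 'I_n}) (x w : 'rV[R]_d) : dotp (gS g S x) w = (#|S|%:R)^-1 * \sum_(i in S) dotp (g i x) w.
Proof. by rewrite /gS dotpZl dotp_suml. Qed.

Lemma fS_grad (S : {set 'I_n}) (x y : 'rV[R]_d) : fS f S x + dotp (gS g S x) (y - x) <= fS f S y.
Proof.
rewrite dotp_gS /fS -mulrDr; apply: ler_wpM2l; first by rewrite invr_ge0.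
rewrite -big_split /=; apply: ler_sum => i _.
by apply: grad_ineq; [exact: Hgrad|exact: HL|exact: Hsm|exact: Hconv].
Qed.

Lemma fS_descent (S : {set 'I_n}) (x y : 'rV[R]_d) : (0 < #|S|)%N ->
  fS f S y <= fS f S x + dotp (gS g S x) (y - x) + Lmax / 2 * sqnorm (y - x).
Proof.
move=> S0.
have -> : Lmax / 2 * sqnorm (y - x) =
   (#|S|%:R)^-1 * \sum_(i in S) (Lmax / 2 * sqnorm (y - x)).
  by rewrite sumr_const -[(Lmax / 2 * _) *+ _]mulr_natr [RHS]mulrC mulrK // unitfE pnatr_eq0 -lt0n.
rewrite dotp_gS /fS -!mulrDr; apply: ler_wpM2l; first by rewrite invr_ge0.
rewrite -!big_split /=; apply: ler_sum => i _.
apply: le_trans; first exact: (@descent _ _ (f i) (g i) (L i) x y (Hgrad i) (HL i) (Hsm i)).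
apply: lerD => //; apply: ler_wpM2r; first exact: sqnorm_ge0.
by apply: ler_wpM2r; [rewrite invr_ge0 ler0n | exact: L_le].
Qed.
Lemma batch_card (S : {set 'I_n}) : S \in batches n B -> #|S| = B.
Proof. by rewrite inE => /eqP. Qed.

Lemma gap (S : {set 'I_n}) (x : 'rV[R]_d) : S \in batches n B ->
  sqnorm (gS g S x) / (2 * Lmax) <= fS f S x - ell S.
Proof.
move=> HS; have S0 : (0 < #|S|)%N by rewrite batch_card.
set G := gS g S x; set a := Lmax^-1.
have Lm := Lmax_gt0.
have H := @fS_descent S x (x - a *: G) S0.
have E : x - a *: G - x = (- a) *: G by apply/rowP => j; rewrite !mxE; ring.
rewrite E dotpZr sqnormZ -/G in H.
have H2 := Hell S HS (x - a *: G).
have E2 : sqnorm G / (2 * Lmax) = - (- a * sqnorm G + Lmax / 2 * ((- a) ^+ 2 * sqnorm G)).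
  rewrite /a; field; lra.
rewrite E2 /sqnorm; rewrite /sqnorm in H; lra.
Qed.

Lemma step_size (S : {set 'I_n}) (x : 'rV[R]_d) : S \in batches n B ->
  gS g S x != 0 -> alpha <= sps_step f g ell c gamma_b S x.
Proof.
move=> HS Hg; have := @gap S x HS; set G := gS g S x => H.
have G0 : 0 < sqnorm G.
  rewrite lt_def sqnorm_ge0 andbT; apply/negP => /eqP/sqnorm_eq0 E.
  by move: Hg; rewrite -/G E eqxx.
have Lm := Lmax_gt0.
rewrite /alpha /sps_step le_min !ge_min lexx !orbT andbT.
apply/orP; left.
rewrite -/G.
have -> : 1 / (2 * c * Lmax) = (sqnorm G / (2 * Lmax)) / (c * sqnorm G).
  field; rewrite !gt_eqF //.
apply: ler_wpM2r; last exact: H.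
by rewrite invr_ge0 mulr_ge0 // ltW.
Qed.
Lemma step_cases (S : {set 'I_n}) (x : 'rV[R]_d) : S \in batches n B ->
  (gS g S x = 0 /\ sgd_step f g ell c gamma_b x S = x) \/
  exists gam, [/\ sgd_step f g ell c gamma_b x S = x - gam *: gS g S x,
     alpha <= gam, gam <= gamma_b &
     gam * c * sqnorm (gS g S x) <= fS f S x - ell S].
Proof.
move=> HS; rewrite /sgd_step; case: eqP => Hg; [by left|right].
have Hg' : gS g S x != 0 by apply/eqP.
exists (sps_step f g ell c gamma_b S x); split => //.
- exact: step_size.
- by rewrite /sps_step ge_min lexx orbT.
have G0 : 0 < sqnorm (gS g S x).
  rewrite lt_def sqnorm_ge0 andbT; apply/negP => /eqP/sqnorm_eq0 E.
  by rewrite E eqxx in Hg'.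
have cG : 0 < c * sqnorm (gS g S x) by rewrite mulr_gt0.
by rewrite -mulrA -ler_pdivlMr // /sps_step ge_min lexx.
Qed.

Lemma sqnorm_step (x G z : 'rV[R]_d) (gam : R) :
  sqnorm (x - gam *: G - z) = sqnorm (x - z) - 2 * gam * dotp (x - z) G + gam ^+ 2 * sqnorm G.
Proof.
have -> : x - gam *: G - z = (x - z) - gam *: G by apply/rowP => j; rewrite !mxE; ring.
by rewrite [LHS]sqnormB dotpZr sqnormZ mulrA.
Qed.

Lemma step_i (S : {set 'I_n}) (x : 'rV[R]_d) : S \in batches n B -> c = 1 ->
  sqnorm (sgd_step f g ell c gamma_b x S - xstar) <=
  sqnorm (x - xstar) - alpha * (fS f S x - fS f S xstar)
    + 2 * gamma_b * (fS f S xstar - ell S).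
Proof.
move=> HS c1.
have Hcv := fS_grad S x xstar.
have Hl := Hell S HS xstar. have Hl2 := Hell S HS x.
have a0 := alpha_gt0. have agb := alpha_le_gb.
case: (@step_cases S x HS) => [[G0 ->]|[gam [-> ag gg gG]]].
  rewrite G0 dotp0l addr0 in Hcv.
  have : 0 <= alpha * (fS f S xstar - fS f S x) by apply: mulr_ge0; lra.
  nra.
rewrite sqnorm_step.
set G := gS g S x in Hcv gG *.
set D := dotp (x - xstar) G.
have HD : fS f S x - fS f S xstar <= D.
  have : dotp G (xstar - x) = - D.
    by rewrite /D -dotpNl opprB dotpC.
  lra.
rewrite c1 mulr1 in gG.
have g0 : 0 <= gam by lra.
have h1 : gam ^+ 2 * sqnorm G <= gam * (fS f S x - ell S).
  by rewrite expr2 -mulrA; apply: ler_wpM2l.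
have h2 : gam * (fS f S x - fS f S xstar) <= gam * D by apply: ler_wpM2l.
have h3 : alpha * (fS f S x - ell S) <= gam * (fS f S x - ell S).
  by apply: ler_wpM2r => //; lra.
have h4 : gam * (fS f S xstar - ell S) <= gamma_b * (fS f S xstar - ell S).
  by apply: ler_wpM2r => //; lra.
have h5 : 0 <= alpha * (fS f S xstar - ell S) by apply: mulr_ge0; lra.
lra.
Qed.

Lemma step_ii (S : {set 'I_n}) (x : 'rV[R]_d) : S \in batches n B -> 1 / 2 <= c ->
  sqnorm (sgd_step f g ell c gamma_b x S - xstar) <=
  sqnorm (x - xstar)
    - 2 * alpha * (fS f S xstar - fS f S x - dotp (gS g S x) (xstar - x))
    + 2 * gamma_b * (fS f S xstar - ell S).
Proof.
move=> HS c12.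
have Hcv := fS_grad S x xstar.
have Hl := Hell S HS xstar. have Hl2 := Hell S HS x.
have a0 := alpha_gt0. have agb := alpha_le_gb.
case: (@step_cases S x HS) => [[G0 ->]|[gam [-> ag gg gG]]].
  rewrite G0 dotp0l addr0 in Hcv; rewrite G0 dotp0l subr0.
  have : alpha * (fS f S xstar - fS f S x) <= gamma_b * (fS f S xstar - ell S).
    apply: le_trans (_ : gamma_b * (fS f S xstar - fS f S x) <= _).
      by apply: ler_wpM2r => //; lra.
    by apply: ler_wpM2l; lra.
  nra.
rewrite sqnorm_step.
set G := gS g S x in Hcv gG *.
set Dg := fS f S xstar - fS f S x - dotp G (xstar - x).
have HD : dotp (x - xstar) G = Dg - fS f S xstar + fS f S x.
  rewrite /Dg dotpC -[x - xstar]opprB dotpNr; ring.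
have HDg : 0 <= Dg by rewrite /Dg; lra.
have g0 : 0 <= gam by lra.
have h0 : gam * sqnorm G <= 2 * (fS f S x - ell S).
  have : gam * sqnorm G * c <= 2 * (fS f S x - ell S) * c.
    apply: (le_trans (_ : _ <= fS f S x - ell S)); first by rewrite mulrAC.
    rewrite -mulrA; nra.
  by rewrite ler_pM2r.
have h1 : gam ^+ 2 * sqnorm G <= gam * (2 * (fS f S x - ell S)).
  by rewrite expr2 -mulrA; apply: ler_wpM2l.
have h3 : alpha * Dg <= gam * Dg by apply: ler_wpM2r.
have h4 : gam * (fS f S xstar - ell S) <= gamma_b * (fS f S xstar - ell S).
  by apply: ler_wpM2r => //; lra.
rewrite HD.
lra.
Qed.
Definition ES (h : {set 'I_n} -> R) : R :=
  (#|batches n B|%:R)^-1 * \sum_(S in batches n B) h S.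

Lemma N0 : (#|batches n B|%:R : R) != 0.
Proof. by rewrite pnatr_eq0 -lt0n card_batches bin_gt0. Qed.

Lemma ES_le (h1 h2 : {set 'I_n} -> R) :
  (forall S, S \in batches n B -> h1 S <= h2 S) -> ES h1 <= ES h2.
Proof.
move=> H; rewrite /ES; apply: ler_wpM2l; first by rewrite invr_ge0 ler0n.
exact: ler_sum.
Qed.

Lemma ES_ext (h1 h2 : {set 'I_n} -> R) :
  (forall S, h1 S = h2 S) -> ES h1 = ES h2.
Proof. by move=> H; rewrite /ES; congr (_ * _); apply: eq_bigr => S _. Qed.

Lemma ES_lin4 (P a1 a2 a3 a4 : R) (h1 h2 h3 h4 : {set 'I_n} -> R) :
  ES (fun S => P + a1 * h1 S + a2 * h2 S + a3 * h3 S + a4 * h4 S) =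
  P + a1 * ES h1 + a2 * ES h2 + a3 * ES h3 + a4 * ES h4.
Proof.
rewrite /ES !big_split /= -!mulr_sumr sumr_const -mulr_natr.
have := N0; set N := (#|batches n B|%:R : R) => HN.
by field.
Qed.

Lemma ES_fS (y : 'rV[R]_d) : ES (fun S => fS f S y) = favg f y.
Proof. by rewrite /ES /favg /fS; apply: batches_avg. Qed.

Lemma ES_dot (x w : 'rV[R]_d) : ES (fun S => dotp (gS g S x) w) = dotp (gavg g x) w.
Proof.
rewrite (@ES_ext _ (fun S => (#|S|%:R)^-1 * \sum_(i in S) dotp (g i x) w)).
  by rewrite /ES batches_avg // /gavg dotpZl dotp_suml.
by move=> S; rewrite dotp_gS.
Qed.

Lemma ES_ell : ES ell = favg f xstar - sig.
Proof. by rewrite /sig /sigma_hat2 /ES opprB addrC subrK. Qed.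

Lemma exp_i (x : 'rV[R]_d) : c = 1 ->
  ES (fun S => sqnorm (sgd_step f g ell c gamma_b x S - xstar)) <=
  sqnorm (x - xstar) - alpha * (favg f x - favg f xstar) + 2 * gamma_b * sig.
Proof.
move=> c1; apply: le_trans.
  apply: ES_le => S HS; exact: (@step_i S x HS c1).
set P := sqnorm (x - xstar).
rewrite (@ES_ext _ (fun S => P + (- alpha) * fS f S x + (alpha + 2 * gamma_b) * fS f S xstar
     + (- (2 * gamma_b)) * ell S + 0 * ell S)); last by move=> S; ring.
rewrite ES_lin4 !ES_fS ES_ell le_eqVlt; apply/orP; left; apply/eqP; ring.
Qed.
Lemma sqnorm_sym (u v : 'rV[R]_d) : sqnorm (u - v) = sqnorm (v - u).
Proof. by rewrite -opprB /sqnorm dotpNl dotpNr opprK. Qed.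

Lemma exp_ii (mu : R) (x : 'rV[R]_d) : strongly_convex_with (favg f) (gavg g) mu ->
  1 / 2 <= c ->
  ES (fun S => sqnorm (sgd_step f g ell c gamma_b x S - xstar)) <=
  (1 - mu * alpha) * sqnorm (x - xstar) + 2 * gamma_b * sig.
Proof.
move=> Hsc c12; apply: le_trans.
  apply: ES_le => S HS; exact: (@step_ii S x HS c12).
set P := sqnorm (x - xstar).
rewrite (@ES_ext _ (fun S => P + (2 * gamma_b - 2 * alpha) * fS f S xstar
     + (2 * alpha) * fS f S x + (2 * alpha) * dotp (gS g S x) (xstar - x)
     + (- (2 * gamma_b)) * ell S)); last by move=> S; ring.
rewrite ES_lin4 !ES_fS ES_ell ES_dot.
have H := Hsc x xstar.
rewrite sqnorm_sym -/P in H.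
have a0 := alpha_gt0.
have : alpha * (favg f x + dotp (gavg g x) (xstar - x) + mu / 2 * P) <= alpha * favg f xstar.
  by apply: ler_wpM2l => //; exact: ltW.
lra.
Qed.
Lemma card_bt k : (#|batch_tuples n B k|%:R : R) = (#|batches n B|%:R) ^+ k.
Proof.
elim: k => [|k IH].
  have -> : batch_tuples n B 0 = [set [tuple]]%SET.
    by apply/setP => t; rewrite !inE tuple0 eqxx.
  by rewrite cards1 expr0.
by rewrite card_tuple_cons IH exprS.
Qed.

Lemma bt_N0 k : (#|batch_tuples n B k|%:R : R) != 0.
Proof. by rewrite card_bt expf_neq0 // N0. Qed.

Lemma expect_le k (F G : k.-tuple {set 'I_n} -> R) :
  (forall t, F t <= G t) -> expect B F <= expect B G.
Proof.
move=> H; rewrite /expect; apply: ler_wpM2l; first by rewrite invr_ge0 ler0n.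
by apply: ler_sum => t _.
Qed.

Lemma expect_ext k (F G : k.-tuple {set 'I_n} -> R) :
  (forall t, F t = G t) -> expect B F = expect B G.
Proof. by move=> H; rewrite /expect; congr (_ * _); apply: eq_bigr => t _. Qed.

Lemma expect_affine k (a b : R) (F : k.-tuple {set 'I_n} -> R) :
  expect B (fun t => a + b * F t) = a + b * expect B F.
Proof.
rewrite /expect big_split /= -mulr_sumr sumr_const -mulr_natr.
have := bt_N0 k; set N := (#|batch_tuples n B k|%:R : R) => HN.
by field.
Qed.

Lemma geom_iter (st : 'rV[R]_d -> {set 'I_n} -> 'rV[R]_d) (V : 'rV[R]_d -> R) (rho b : R) :
  0 <= rho -> (forall x, ES (fun S => V (st x S)) <= rho * V x + b) ->
  forall k x0, expect B (fun t : k.-tuple {set 'I_n} => V (foldl st x0 t))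
    <= rho ^+ k * V x0 + b * \sum_(j < k) rho ^+ j.
Proof.
move=> r0 Hst; elim=> [|k IH] x0.
  by rewrite (@expect0 R n B (fun s => V (foldl st x0 s))) big_ord0 expr0 mul1r mulr0 addr0.
rewrite (@expect_cons R n B k (fun s => V (foldl st x0 s))).
change (ES (fun S => expect B (fun t : k.-tuple {set 'I_n} => V (foldl st (st x0 S) t)))
   <= rho ^+ k.+1 * V x0 + b * \sum_(j < k.+1) rho ^+ j).
apply: le_trans.
  apply: ES_le => S _; exact: IH.
rewrite (@ES_ext _ (fun S => b * \sum_(j < k) rho ^+ j + rho ^+ k * V (st x0 S)
   + 0 * V (st x0 S) + 0 * V (st x0 S) + 0 * V (st x0 S))); last by move=> S; ring.
rewrite ES_lin4 !mul0r !addr0 big_ord_recr /= exprS.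
have : rho ^+ k * ES (fun S => V (st x0 S)) <= rho ^+ k * (rho * V x0 + b).
  by apply: ler_wpM2l; [exact: exprn_ge0|exact: Hst].
lra.
Qed.

Lemma sum_iter (st : 'rV[R]_d -> {set 'I_n} -> 'rV[R]_d) (V h : 'rV[R]_d -> R) (al b : R) :
  0 <= al -> (forall x, 0 <= V x) ->
  (forall x, ES (fun S => V (st x S)) <= V x - al * h x + b) ->
  forall K x0, al * expect B (fun t : K.-tuple {set 'I_n} =>
      \sum_(j < K) h (foldl st x0 (take j t))) <= V x0 + b * K%:R.
Proof.
move=> a0 V0 Hst; elim=> [|K IH] x0.
  rewrite (@expect0 R n B (fun s => \sum_(j < 0) h (foldl st x0 (take j s)))) big_ord0 mulr0 mulr0 addr0.
  exact: V0.
rewrite (@expect_cons R n B K (fun s => \sum_(j < K.+1) h (foldl st x0 (take j s)))).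
change (al * ES (fun S => expect B (fun t : K.-tuple {set 'I_n} =>
   \sum_(j < K.+1) h (foldl st x0 (take j (S :: t))))) <= V x0 + b * K.+1%:R).
rewrite (@ES_ext _ (fun S => h x0 + 1 * expect B (fun t : K.-tuple {set 'I_n} =>
   \sum_(j < K) h (foldl st (st x0 S) (take j t))))); last first.
  move=> S; rewrite -expect_affine; apply: expect_ext => t.
  by rewrite big_ord_recl /= mul1r.
rewrite (@ES_ext _ (fun S => h x0 + 1 * expect B (fun t : K.-tuple {set 'I_n} =>
   \sum_(j < K) h (foldl st (st x0 S) (take j t))) + 0 * h x0 + 0 * h x0 + 0 * h x0)); last by move=> S; ring.
rewrite ES_lin4 !mul0r !addr0 mul1r.
set H := (fun S => expect B (fun t : K.-tuple {set 'I_n} =>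
   \sum_(j < K) h (foldl st (st x0 S) (take j t)))).
have E1 : al * ES H = ES (fun S => 0 + al * H S + 0 * H S + 0 * H S + 0 * H S).
  by rewrite ES_lin4; ring.
have : al * ES H <= ES (fun S => V (st x0 S)) + b * K%:R.
  rewrite E1; apply: le_trans.
    apply: ES_le => S _.
    apply: (_ : _ <= b * K%:R + 1 * V (st x0 S) + 0 * H S + 0 * H S + 0 * H S).
    rewrite !mul0r !addr0 mul1r add0r addrC; exact: IH.
  by rewrite ES_lin4 !mul0r !addr0 mul1r addrC.
have := Hst x0.
rewrite -natr1.
lra.
Qed.
Lemma favg_fS (x : 'rV[R]_d) : favg f x = fS f [set: 'I_n] x.
Proof.
by rewrite /favg /fS cardsT card_ord; congr (_ * _); apply: eq_bigl => i; rewrite inE.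
Qed.
Lemma gavg_gS (x : 'rV[R]_d) : gavg g x = gS g [set: 'I_n] x.
Proof.
by rewrite /gavg /gS cardsT card_ord; congr (_ *: _); apply: eq_bigl => i; rewrite inE.
Qed.

Lemma dotp_sumr (I : finType) (F : I -> 'rV[R]_d) w :
  dotp w (\sum_i F i) = \sum_i dotp w (F i).
Proof. by rewrite dotpC dotp_suml; apply: eq_bigr => i _; rewrite dotpC. Qed.

Lemma jensen K (xs : 'I_K -> 'rV[R]_d) : (0 < K)%N ->
  favg f ((K%:R)^-1 *: \sum_(j < K) xs j) - favg f xstar <=
  (K%:R)^-1 * \sum_(j < K) (favg f (xs j) - favg f xstar).
Proof.
move=> K0; set xb := (K%:R)^-1 *: \sum_(j < K) xs j.
have KN : (K%:R : R) != 0 by rewrite pnatr_eq0 -lt0n.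
have H j : favg f xb + dotp (gavg g xb) (xs j - xb) <= favg f (xs j).
  by rewrite !favg_fS gavg_gS; exact: fS_grad.
have Hs : \sum_(j < K) (favg f xb + dotp (gavg g xb) (xs j - xb)) <= \sum_(j < K) favg f (xs j).
  by apply: ler_sum => j _; exact: H.
rewrite big_split /= -dotp_sumr sumrB !sumr_const !card_ord in Hs.
have E : \sum_(i < K) xs i - xb *+ K = 0.
  by rewrite -scaler_nat /xb scalerA mulfV // scale1r subrr.

rewrite E dotpC dotp0l addr0 -mulr_natr in Hs.
rewrite sumrB sumr_const card_ord mulrBr -[favg f xstar *+ K]mulr_natr [favg f xstar * _]mulrC mulrA mulVf // mul1r lerD2r.
by rewrite ler_pdivlMl ?ltr0n // -?lt0n // mulrC.
Qed.

Lemma sig_ge0 : 0 <= sig.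
Proof.
have : ES (fun S => 0 + 0 * ell S + 0 * ell S + 0 * ell S + 0 * ell S) <=
       ES (fun S => 0 + 1 * fS f S xstar + (-1) * ell S + 0 * ell S + 0 * ell S).
  apply: ES_le => S HS; have := Hell S HS xstar; lra.
rewrite !ES_lin4 ES_fS ES_ell; lra.
Qed.

Lemma part_i (x0 : 'rV[R]_d) : c = 1 ->
   forall K : nat, (1 <= K)%N ->
     expect B (fun t : K.-tuple {set 'I_n} =>
        favg f (avg_iterate f g ell c gamma_b x0 t) - favg f xstar)
     <= sqnorm (x0 - xstar) / (alpha * K%:R) + 2 * gamma_b * sig / alpha.
Proof.
move=> c1 K K1.
set st := sgd_step f g ell c gamma_b.
set h := fun y => favg f y - favg f xstar.
have a0 := alpha_gt0.
have Hsum := @sum_iter st (fun y => sqnorm (y - xstar)) h alpha (2 * gamma_b * sig)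
   (ltW a0) (fun y => @sqnorm_ge0 R d (y - xstar)) (fun x => exp_i x c1) K x0.
apply: le_trans.
  apply: (@expect_le K _ (fun t => 0 + (K%:R)^-1 * \sum_(j < K) h (foldl st x0 (take j t)))).
  move=> t; rewrite add0r /avg_iterate.
  rewrite /h /st; exact: (@jensen K (fun j : 'I_K => iterate f g ell c gamma_b x0 (take j t)) K1).
rewrite expect_affine add0r.
set E := expect B _ in Hsum *.
have KP : (0 : R) < K%:R by rewrite ltr0n.
have : E <= (sqnorm (x0 - xstar) + 2 * gamma_b * sig * K%:R) / alpha.
  by rewrite ler_pdivlMr // mulrC.
move=> HE.
have -> : sqnorm (x0 - xstar) / (alpha * K%:R) + 2 * gamma_b * sig / alpha
   = (K%:R)^-1 * ((sqnorm (x0 - xstar) + 2 * gamma_b * sig * K%:R) / alpha).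
  by field; rewrite !gt_eqF.
by apply: ler_wpM2l => //; rewrite invr_ge0 ltW.
Qed.

Lemma geom_sum (rho : R) k : (\sum_(j < k) rho ^+ j) * (1 - rho) = 1 - rho ^+ k.
Proof.
elim: k => [|k IH]; first by rewrite big_ord0 mul0r expr0 subrr.
by rewrite big_ord_recr /= mulrDl IH exprS; ring.
Qed.

Lemma part_ii (x0 : 'rV[R]_d) (mu : R) : 0 < mu ->
  strongly_convex_with (favg f) (gavg g) mu -> 1 / 2 <= c ->
  forall k : nat,
    expect B (fun t : k.-tuple {set 'I_n} =>
        sqnorm (iterate f g ell c gamma_b x0 t - xstar))
     <= (1 - mu * alpha) ^+ k * sqnorm (x0 - xstar)
        + 2 * gamma_b * sig / (mu * alpha).
Proof.
move=> mu0 Hsc c12 k.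
have a0 := alpha_gt0. have s0 := sig_ge0.
have b1 : 0 <= 2 * gamma_b * sig.
  by rewrite -mulrA; apply: mulr_ge0; [rewrite ler0n | apply: mulr_ge0 => //; exact: ltW].
have ma0 : 0 < mu * alpha by apply: mulr_gt0.
have b0 : 0 <= 2 * gamma_b * sig / (mu * alpha) by apply: divr_ge0 => //; exact: ltW.
case: (posnP d) => Hd.
  have Z (u : 'rV[R]_d) : sqnorm u = 0.
    apply: big1 => j _; have : (j < 0)%N by apply: leq_trans (ltn_ord j) _; rewrite Hd.
    by [].
  rewrite (@expect_ext k _ (fun t => 0 + 0 * 0)); last by move=> t; rewrite Z mul0r addr0.
  rewrite expect_affine !mul0r add0r Z mulr0 add0r //.
set u : 'rV[R]_d := const_mx 1.
have Hu : sqnorm (u - 0) = d%:R.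
  rewrite subr0 /sqnorm /dotp (eq_bigr (fun _ => 1)); last by move=> j _; rewrite mxE mulr1.
  by rewrite sumr_const card_ord.
have Hu0 : 0 < sqnorm (u - 0) by rewrite Hu ltr0n.
have Hsc1 := Hsc 0 u.
have S0 : (0 < #|[set: 'I_n]%SET|)%N by rewrite cardsT card_ord n_gt0.
have Hde := @fS_descent [set: 'I_n]%SET 0 u S0.
rewrite -!favg_fS -gavg_gS in Hde.
have muL : mu <= Lmax.
  have : mu / 2 * sqnorm (u - 0) <= Lmax / 2 * sqnorm (u - 0) by lra.
  rewrite ler_pM2r // => H2.
  by rewrite -(ler_pM2r (_ : 0 < 2^-1)) ?invr_gt0 ?ltr0n.
have Lm := Lmax_gt0.
have aL : alpha <= 1 / (2 * c * Lmax) by rewrite /alpha ge_min lexx.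
have ma1 : mu * alpha <= 1.
  have h1 : mu * alpha <= Lmax * alpha by apply: ler_wpM2r => //; exact: ltW.
  have h2 : Lmax * alpha <= Lmax * (1 / (2 * c * Lmax)) by apply: ler_wpM2l => //; exact: ltW.
  have h3 : Lmax * (1 / (2 * c * Lmax)) = 1 / (2 * c) by field; rewrite !gt_eqF //; lra.
  have h4 : 1 / (2 * c) <= 1 by rewrite ler_pdivrMr ?mul1r; lra.
  lra.
have r0 : 0 <= 1 - mu * alpha by lra.
have G := @geom_iter (sgd_step f g ell c gamma_b) (fun y => sqnorm (y - xstar))
   (1 - mu * alpha) (2 * gamma_b * sig) r0 (fun x => @exp_ii mu x Hsc c12) k x0.
apply: (le_trans G); rewrite lerD2l.
have Gs := geom_sum (1 - mu * alpha) k.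
have E1 : 1 - (1 - mu * alpha) = mu * alpha by ring.
rewrite E1 in Gs.
have Hk : 0 <= (1 - mu * alpha) ^+ k by exact: exprn_ge0.
have Hs : \sum_(j < k) (1 - mu * alpha) ^+ j <= 1 / (mu * alpha).
  by rewrite ler_pdivlMr // Gs; lra.
rewrite mul1r in Hs.
by apply: ler_wpM2l.
Qed.
End M.
Local Close Scope classical_set_scope.

Theorem theorem2 (R : realType) (n d B : nat)
  (f : 'I_n -> 'rV[R]_d -> R) (g : 'I_n -> 'rV[R]_d -> 'rV[R]_d)
  (L : 'I_n -> R) (ell : {set 'I_n} -> R) (c gamma_b : R)
  (x0 xstar : 'rV[R]_d) :
  (0 < B)%N -> (B <= n)%N ->
  (forall i, is_gradient (f i) (g i)) ->
  (forall i, convex_fun (f i)) ->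
  (forall i, 0 < L i) ->
  (forall i, smooth_with (g i) (L i)) ->
  (forall x, favg f xstar <= favg f x) ->
  (forall S, S \in batches n B -> forall x, ell S <= fS f S x) ->
  0 < c -> 0 < gamma_b ->
  let Lmax := \big[Num.max/0]_(i < n) L i in
  let alpha := Num.min (1 / (2 * c * Lmax)) gamma_b in
  let sig := sigma_hat2 f ell B xstar in
  (* (i) *)
  (c = 1 ->
   forall K : nat, (1 <= K)%N ->
     expect B (fun t : K.-tuple {set 'I_n} =>
        favg f (avg_iterate f g ell c gamma_b x0 t) - favg f xstar)
     <= sqnorm (x0 - xstar) / (alpha * K%:R) + 2 * gamma_b * sig / alpha)
  /\
  (* (ii) *)
  (forall mu : R, 0 < mu -> strongly_convex_with (favg f) (gavg g) mu ->
   1 / 2 <= c ->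
   forall k : nat,
     expect B (fun t : k.-tuple {set 'I_n} =>
        sqnorm (iterate f g ell c gamma_b x0 t - xstar))
     <= (1 - mu * alpha) ^+ k * sqnorm (x0 - xstar)
        + 2 * gamma_b * sig / (mu * alpha)).
Proof.
move=> HB0 HBn Hgrad Hconv HL Hsm Hmin Hell Hc Hgb Lmax alpha sig.
split.
- move=> c1 K K1.
  by apply: part_i.
- move=> mu mu0 Hsc c12 k.
  by apply: part_ii.
Qed.
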